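(* Consider the delayed online convex optimization setting described in the context, with a non-empty, closed, convex domain $\mathcal{X}\subseteq\mathbb{R}^n$. Let $\lambda>0$ and $G\ge 0$, and assume that each loss $f_t$ ($t\in[T]$) is $\lambda$-strongly convex with respect to the Euclidean norm, i.e. $f_t(y)\ge f_t(x)+\langle\nabla f_t(x),y-x\rangle+\frac{\lambda}{2}\|y-x\|_2^2$ for all $x,y\in\mathcal{X}$, and that $\max_{x\in\mathcal{X}}\|\nabla f_t(x)\|_2\le G$. Consider the learner (Delayed FTRL) that plays an arbitrary $x_1\in\mathcal{X}$ and, for each $t\ge 1$, after observing $g_\tau$ for all $\tau\in o_{t+1}\setminus o_t$, plays at round $t+1$ $$x_{t+1}\in\arg\min_{x\in\mathcal{X}}\ \sum_{\tau\in o_{t+1}}\langle g_\tau,x\rangle+\frac{\lambda}{2}\sum_{s=1}^{t}\|x-x_s\|_2^2 .$$ Then $$\mathrm{Reg}_T=\mathcal{O}\left(\frac{G^2}{\lambda}\left(\ln T+\min\left\{\sigma_{\max}\ln T,\sqrt{d_{\mathrm{tot}}}\right\}\right)\right),$$ i.e. there is an absolute numerical constant $C>0$ (independent of $T,n,\lambda,G$, the losses and the delays) such that for every $T\ge 2$, $\mathrm{Reg}_T\le C\,\frac{G^2}{\lambda}\left(\ln T+\min\{\sigma_{\max}\ln T,\sqrt{d_{\mathrm{tot}}}\}\right)$.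
   Context: Delayed OCO setting: $T\ge1$ and $n\ge1$ are integers, $[T]=\{1,\dots,T\}$. For each round $t\in[T]$ the learner chooses $x_t\in\mathcal{X}$ and incurs loss $f_t(x_t)$, where $f_t:\mathcal{X}\to\mathbb{R}$ is convex and differentiable (and may be chosen adversarially). The gradient $g_t=\nabla f_t(x_t)$ is revealed to the learner only at the end of round $t+d_t$, where $d_t\in\{0,1,2,\dots\}$ is an arbitrary delay unknown to the learner; it is assumed that $t+d_t\le T$ for all $t\in[T]$. For $t\ge 1$ define $o_t=\{\tau\in\mathbb{N}:\tau+d_\tau<t\}\subseteq[t-1]$ (rounds whose gradients are available before round $t$) and $m_t=[t-1]\setminus o_t$. Let $\sigma_{\max}=\max_{t\in[T]}|m_t|$, $d_{\max}=\max_{t\in[T]}d_t$, and $d_{\mathrm{tot}}=\sum_{t=1}^T d_t$. The regret against $u\in\mathcal{X}$ is $\mathrm{Reg}_T(u)=\sum_{t=1}^T(f_t(x_t)-f_t(u))$ and $\mathrm{Reg}_T=\sup_{u\in\mathcal{X}}\mathrm{Reg}_T(u)$. *)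

(* Defs.v *)
From HB Require Import structures.
From mathcomp Require Import all_boot all_order all_algebra.
From mathcomp Require Import all_classical all_reals all_analysis.
From mathcomp Require Import Rstruct Rstruct_topology.
From Stdlib Require Import Rdefinitions.
Set Implicit Arguments. Unset Strict Implicit. Unset Printing Implicit Defensive.
Import Order.TTheory GRing.Theory Num.Theory.
Import numFieldNormedType.Exports.
Local Open Scope ring_scope.
Local Open Scope classical_set_scope.

Notation R := Rdefinitions.R.

Definition dotp (n : nat) (a b : 'rV[R]_n) : R := \sum_(i < n) a ord0 i * b ord0 i.
Definition norm2 (n : nat) (a : 'rV[R]_n) : R := Num.sqrt (dotp a a).

Definition convex_set_in (n : nat) (X : set 'rV[R]_n) : Prop :=
  forall x y (a : R), X x -> X y -> 0 <= a -> a <= 1 ->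
    X (a *: x + (1 - a) *: y).

Definition is_gradient (n : nat) (f : 'rV[R]_n -> R^o) (x g : 'rV[R]_n) : Prop :=
  differentiable f x /\ forall v : 'rV[R]_n, ('d f x : 'rV[R]_n -> R^o) v = dotp g v.

Definition strongly_convex_on (n : nat) (X : set 'rV[R]_n) (lam : R)
  (f : 'rV[R]_n -> R) (grad : 'rV[R]_n -> 'rV[R]_n) : Prop :=
  forall x y, X x -> X y ->
    f x + dotp (grad x) (y - x) + lam / 2 * (norm2 (y - x)) ^+ 2 <= f y.

Definition convex_on (n : nat) (X : set 'rV[R]_n) (f : 'rV[R]_n -> R) : Prop :=
  forall x y (a : R), X x -> X y -> 0 <= a -> a <= 1 ->
    f (a *: x + (1 - a) *: y) <= a * f x + (1 - a) * f y.

Definition obs (d : nat -> nat) (t : nat) : seq nat :=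
  [seq tau <- iota 1 t.-1 | (ltn (addn tau (d tau)) t)].
Definition miss (d : nat -> nat) (t : nat) : seq nat :=
  [seq tau <- iota 1 t.-1 | ~~ (ltn (addn tau (d tau)) t)].
Definition sigma_max (T : nat) (d : nat -> nat) : nat :=
  (\max_(1 <= t < T.+1) size (miss d t))%N.
Definition d_tot (T : nat) (d : nat -> nat) : nat :=
  (\sum_(1 <= t < T.+1) d t)%N.

(* Delayed FTRL objective at the end of round t (defining x_{t+1}) *)
Definition ftrl_obj (n : nat) (d : nat -> nat) (lam : R)
  (g : nat -> 'rV[R]_n) (x : nat -> 'rV[R]_n) (t : nat) (y : 'rV[R]_n) : R :=
  \sum_(tau <- obs d t.+1) dotp (g tau) y
  + lam / 2 * \sum_(1 <= s < t.+1) (norm2 (y - x s)) ^+ 2.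

(* Main.v *)
Require Import Defs.
From HB Require Import structures.
From mathcomp Require Import all_boot all_order all_algebra.
From mathcomp Require Import all_classical all_reals all_analysis.
From mathcomp Require Import Rstruct Rstruct_topology.
From mathcomp Require Import ring lra zify.
Import Order.TTheory GRing.Theory Num.Theory.
Import numFieldNormedType.Exports.
Local Open Scope ring_scope.
Local Open Scope classical_set_scope.
Set Implicit Arguments. Unset Strict Implicit. Unset Printing Implicit Defensive.
Section Dot.
Variable n : nat.
Implicit Types a b c : 'rV[R]_n.

Lemma dotpC a b : dotp a b = dotp b a.
Proof. by rewrite /dotp; apply: eq_bigr => i _; rewrite mulrC. Qed.

Lemma dotpDl a b c : dotp (a + b) c = dotp a c + dotp b c.
Proof. by rewrite /dotp -big_split; apply: eq_bigr => i _; rewrite !mxE mulrDl. Qed.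

Lemma dotpZl k a c : dotp (k *: a) c = k * dotp a c.
Proof. by rewrite /dotp mulr_sumr; apply: eq_bigr => i _; rewrite !mxE mulrA. Qed.

Lemma dotpNl a c : dotp (- a) c = - dotp a c.
Proof. by rewrite /dotp -sumrN; apply: eq_bigr => i _; rewrite !mxE mulNr. Qed.

Lemma dotpBl a b c : dotp (a - b) c = dotp a c - dotp b c.
Proof. by rewrite dotpDl dotpNl. Qed.

Lemma dotp0l c : dotp 0 c = 0.
Proof. by rewrite /dotp big1 // => i _; rewrite mxE mul0r. Qed.

Lemma dotpDr a b c : dotp c (a + b) = dotp c a + dotp c b.
Proof. by rewrite dotpC dotpDl !(dotpC c). Qed.
Lemma dotpBr a b c : dotp c (a - b) = dotp c a - dotp c b.
Proof. by rewrite dotpC dotpBl !(dotpC c). Qed.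
Lemma dotpZr k a c : dotp c (k *: a) = k * dotp c a.
Proof. by rewrite dotpC dotpZl dotpC. Qed.
Lemma dotpNr a c : dotp c (- a) = - dotp c a.
Proof. by rewrite dotpC dotpNl dotpC. Qed.

Lemma dotp_suml (I : Type) (s : seq I) (F : I -> 'rV[R]_n) c :
  dotp (\sum_(i <- s) F i) c = \sum_(i <- s) dotp (F i) c.
Proof.
elim: s => [|x s IH]; first by rewrite !big_nil dotp0l.
by rewrite !big_cons dotpDl IH.
Qed.

Lemma dotp_ge0 a : 0 <= dotp a a.
Proof. by rewrite /dotp; apply: sumr_ge0 => i _; rewrite -expr2 sqr_ge0. Qed.

Lemma norm2_sq a : norm2 a ^+ 2 = dotp a a.
Proof. by rewrite /norm2 sqr_sqrtr // dotp_ge0. Qed.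

Lemma norm2_ge0 a : 0 <= norm2 a.
Proof. exact: sqrtr_ge0. Qed.

Lemma dotp_eq0 a c : dotp a a = 0 -> dotp a c = 0.
Proof.
move=> H.
have Hi : forall i, a ord0 i = 0.
  move=> i; apply/eqP; rewrite -sqrf_eq0 expr2; apply/eqP.
  by apply: (psumr_eq0P (P := xpredT) (F := fun i => a ord0 i * a ord0 i)) => // j _; rewrite -expr2 sqr_ge0.
by rewrite /dotp big1 // => i _; rewrite Hi mul0r.
Qed.

Lemma CS a b : dotp a b <= norm2 a * norm2 b.
Proof.
set A := dotp a a; set B := dotp b b; set c := dotp a b.
have A0 : 0 <= A by apply: dotp_ge0.
have B0 : 0 <= B by apply: dotp_ge0.
have [cle0|cgt0] := lerP c 0.
  by apply: le_trans cle0 _; apply: mulr_ge0; apply: norm2_ge0.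
have Hc2 : c ^+ 2 <= A * B.
  have [A0'|Apos] := eqVneq A 0.
    by move: cgt0; rewrite /c (@dotp_eq0 a b A0') ltxx.
  have := dotp_ge0 (A *: b - c *: a).
  rewrite dotpBl !dotpBr !dotpZl !dotpZr -/A -/B -/c (dotpC b a) -/c => H.
  have Ap : 0 < A by rewrite lt_def Apos A0.
  have : 0 <= A * (A * B - c ^+ 2) by move: H; rewrite expr2; nra.
  by rewrite pmulr_rge0 // subr_ge0.
rewrite /norm2 -sqrtrM // -(ger0_norm (ltW cgt0)) -sqrtr_sqr ler_sqrt //.
exact: mulr_ge0.
Qed.
End Dot.
Section Quad.
Variable n : nat.
Implicit Types a b c x y z : 'rV[R]_n.

Lemma norm2N a : norm2 (- a) = norm2 a.
Proof. by rewrite /norm2 dotpNl dotpNr opprK. Qed.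

Lemma norm2_sub_sym a b : norm2 (a - b) = norm2 (b - a).
Proof. by rewrite -norm2N opprB. Qed.

Definition mid x y : 'rV[R]_n := (1/2 : R) *: x + (1 - 1/2) *: y.

Lemma mid_sq x y c : norm2 (mid x y - c) ^+ 2 =
  (norm2 (x - c) ^+ 2 + norm2 (y - c) ^+ 2) / 2 - norm2 (x - y) ^+ 2 / 4.
Proof.
have E1 : mid x y - c = (1/2 : R) *: (x - c) + (1/2 : R) *: (y - c).
  by apply/rowP => i; rewrite !mxE; field.
have E2 : x - y = (x - c) - (y - c).
  by apply/rowP => i; rewrite !mxE; field.
rewrite E1 E2 !norm2_sq.
move: (x - c) (y - c) => p q.
rewrite !(dotpDl, dotpDr, dotpBl, dotpBr, dotpZl, dotpZr, dotpNl, dotpNr).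
rewrite (dotpC q p).
by field.
Qed.

Lemma mid_dot A x y : dotp A (mid x y) = (dotp A x + dotp A y) / 2.
Proof. rewrite /mid dotpDr !dotpZr; by field. Qed.

Lemma sum_const_seq (S : seq nat) (k : R) : \sum_(s <- S) k = (size S)%:R * k.
Proof.
elim: S => [|s S IH]; first by rewrite big_nil mul0r.
by rewrite big_cons IH /= -addn1 natrD; ring.
Qed.

Definition Q (lam : R) (A : 'rV[R]_n) (S : seq nat) (c : nat -> 'rV[R]_n) y :=
  dotp A y + lam / 2 * \sum_(s <- S) norm2 (y - c s) ^+ 2.

Lemma Q_mid lam A S (c : nat -> 'rV[R]_n) x y : Q lam A S c (mid x y) =
  (Q lam A S c x + Q lam A S c y) / 2 - lam / 2 * (size S)%:R * norm2 (x - y) ^+ 2 / 4.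
Proof.
rewrite /Q mid_dot.
have -> : \sum_(s <- S) norm2 (mid x y - c s) ^+ 2 =
  (\sum_(s <- S) norm2 (x - c s) ^+ 2 + \sum_(s <- S) norm2 (y - c s) ^+ 2) / 2
  - (size S)%:R * (norm2 (x - y) ^+ 2 / 4).
  transitivity (\sum_(s <- S) ((norm2 (x - c s) ^+ 2 + norm2 (y - c s) ^+ 2) / 2
     - norm2 (x - y) ^+ 2 / 4)).
    by apply: eq_bigr => s _; rewrite mid_sq.
  by rewrite sumrB -mulr_suml big_split /= sum_const_seq.
by field.
Qed.

Lemma approx_min_sc (X : set 'rV[R]_n) lam A S (c : nat -> 'rV[R]_n) z y eps :
  convex_set_in X -> X z -> X y ->
  (forall w, X w -> Q lam A S c z <= Q lam A S c w + eps) ->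
  Q lam A S c z + lam * (size S)%:R / 4 * norm2 (y - z) ^+ 2 - 2 * eps
    <= Q lam A S c y.
Proof.
move=> cX Xz Xy Hmin.
have Xm : X (mid z y) by apply: cX => //; lra.
have := Hmin _ Xm; rewrite Q_mid (norm2_sub_sym z y).
lra.
Qed.
End Quad.
Lemma quad_root (r a e : R) : 0 <= r -> 0 <= a -> 0 <= e ->
  r ^+ 2 <= a * r + e ^+ 2 -> r <= a + e.
Proof. move=> r0 a0 e0; rewrite !expr2 => H. nra. Qed.

Lemma ln_le_sub1 (x : R) : 0 < x -> ln x <= x - 1.
Proof.
move=> x0; have := expR_ge1Dx (ln x); rewrite lnK ?posrE //; lra.
Qed.

Lemma ln_ge (x : R) : 0 < x -> 1 - x^-1 <= ln x.
Proof.
move=> x0; have xi : 0 < x^-1 by rewrite invr_gt0.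
have := ln_le_sub1 xi; rewrite lnV ?posrE //; lra.
Qed.

Lemma ln2_ge : 1/2 <= ln (2 : R).
Proof. have := @ln_ge 2 (ltr0Sn _ 1); have -> : (2 : R)^-1 = 1/2 by rewrite div1r. lra. Qed.

Lemma harmonic (N : nat) : (1 <= N)%N ->
  \sum_(1 <= t < N.+1) (t%:R : R)^-1 <= 1 + ln (N%:R : R).
Proof.
elim: N => [//|N IH] _.
case: N IH => [|N] IH.
  by rewrite big_nat1 ln1 invr1 lerDl.
rewrite big_nat_recr //=.
have {}IH := IH isT.
have hN : 0 < (N.+1%:R : R) by rewrite ltr0n.
have hN2 : 0 < (N.+2%:R : R) by rewrite ltr0n.
have : (N.+2%:R : R)^-1 <= ln (N.+2%:R : R) - ln (N.+1%:R : R).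
  have q : 0 < (N.+2%:R : R) / N.+1%:R by apply: divr_gt0.
  have := ln_ge q; rewrite lnM ?posrE ?invr_gt0 // lnV ?posrE //.
  rewrite invf_div.
  have -> : 1 - (N.+1%:R : R) / N.+2%:R = (N.+2%:R)^-1.
    have e : (N.+2%:R : R) = N.+1%:R + 1 by rewrite natr1.
    rewrite e in hN2 *.
    by field; rewrite gt_eqF.
  by [].
move=> h; apply: le_trans (lerD IH (lexx _)) _.
move: h; set L1 := ln _; set L2 := ln _; set u := _^-1; lra.
Qed.
Lemma count_itv (m N a b : nat) :
  (\sum_(m <= t < N) (a < t <= b) <= minn N b.+1 - a.+1)%N.
Proof.
elim: N => [|N IH]; first by rewrite big_geq.
case: (leqP m N) => hm.
  rewrite big_nat_recr //=.
  case: (boolP (a < N <= b)%N) => /= H.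
    move: H => /andP [h1 h2]. move: IH. lia.
  move: IH. lia.
rewrite big_geq //.
Qed.

Lemma size_miss (d : nat -> nat) t :
  size (miss d t) = (\sum_(1 <= tau < t | ~~ (tau + d tau < t)) 1)%N.
Proof.
by rewrite /miss -sum1_size big_filter /index_iota subn1.
Qed.

Lemma sum_miss (T : nat) (d : nat -> nat) :
  (\sum_(1 <= t < T.+1) size (miss d t) <= d_tot T d)%N.
Proof.
rewrite /d_tot.
have -> : (\sum_(1 <= t < T.+1) size (miss d t) =
   \sum_(1 <= t < T.+1) \sum_(1 <= tau < T.+1) ((tau < t) && ~~ (tau + d tau < t)))%N.
  rewrite big_nat_cond [RHS]big_nat_cond.
  apply: eq_bigr => t /andP [/andP [h1 h2] _].
  rewrite size_miss (big_nat_widen _ _ T.+1); last exact: ltnW h2.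
  rewrite big_mkcond /=; apply: eq_bigr => tau _.
  by rewrite andbC; case: (_ && _).
rewrite exchange_big_nat /=.
apply: leq_sum => tau _.
have -> : (\sum_(1 <= t < T.+1) ((tau < t) && ~~ (tau + d tau < t)) =
   \sum_(1 <= t < T.+1) (tau < t <= tau + d tau))%N.
  by apply: eq_bigr => t _; rewrite -leqNgt.
apply: leq_trans (count_itv 1 T.+1 tau (tau + d tau)) _.
lia.
Qed.
Lemma miss_le_sigma (T : nat) (d : nat -> nat) t : (1 <= t <= T)%N ->
  (size (miss d t) <= sigma_max T d)%N.
Proof.
move=> ht; rewrite /sigma_max.
by apply: (leq_bigmax_seq (F := fun t => size (miss d t))) => //; rewrite mem_index_iota ltnS.
Qed.

Lemma count_le (k : R) (N : nat) : 0 <= k ->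
  \sum_(1 <= t < N.+1) (if (t%:R : R) <= k then 1 else 0 : R) <= k.
Proof.
move=> k0.
suff : \sum_(1 <= t < N.+1) (if (t%:R : R) <= k then 1 else 0 : R) <= N%:R /\
       \sum_(1 <= t < N.+1) (if (t%:R : R) <= k then 1 else 0 : R) <= k by case.
elim: N => [|N [IH1 IH2]]; first by rewrite big_geq.
rewrite big_nat_recr //=.
case: ifP => h.
  have : \sum_(1 <= i < N.+1) (if (i%:R : R) <= k then 1 else 0 : R) + 1 <= N.+1%:R.
    by rewrite -natr1 lerD2r.
  move=> H; split => //; apply: le_trans H h.
by rewrite addr0; split => //; apply: le_trans IH1 _; rewrite ler_nat.
Qed.

Lemma sum_min_sqrt (T : nat) (m : nat -> R) (D : R) :
  (forall t, 0 <= m t) -> \sum_(1 <= t < T.+1) m t <= D ->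
  \sum_(1 <= t < T.+1) Order.min 1 (m t / t%:R) <= 2 * Num.sqrt D.
Proof.
move=> m0 HD.
have D0 : 0 <= D by apply: le_trans HD; apply: sumr_ge0 => t _.
set k := Num.sqrt D.
have k0 : 0 <= k by apply: sqrtr_ge0.
have [k0'|kpos] := eqVneq k 0.
  have : D = 0 by rewrite -(sqr_sqrtr D0) -/k k0' expr2 mulr0.
  move=> D00; rewrite k0' mulr0 ; rewrite D00 in HD; apply: (le_trans _ HD).
  rewrite big_nat_cond [X in _ <= X]big_nat_cond.
  apply: ler_sum => t /andP [/andP [h1 _] _].
  rewrite ge_min; apply/orP; right.
  have tp : 1 <= (t%:R : R) by rewrite ler1n.
  rewrite ler_pdivrMr; last by lra.
  have := m0 t; nra.
have kp : 0 < k by rewrite lt_def kpos k0.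
have Dk : D = k * k by rewrite /k -expr2 sqr_sqrtr.
apply: (@le_trans _ _ (\sum_(1 <= t < T.+1) ((if (t%:R : R) <= k then 1 else 0) + m t / k))).
  rewrite big_nat_cond [X in _ <= X]big_nat_cond.
  apply: ler_sum => t /andP [/andP [h1 _] _].
  have tp : 0 < (t%:R : R) by rewrite ltr0n.
  case: ifP => h.
    rewrite ge_min; apply/orP; left.
    by rewrite lerDl divr_ge0 // ltW.
  rewrite add0r; rewrite ge_min; apply/orP; right.
  apply: ler_wpM2l => //.
  rewrite lef_pV2 ?posrE //; apply: ltW; rewrite ltNge h //.
rewrite big_split /= -mulr_suml.
have := count_le T k0.
have : (\sum_(1 <= i < T.+1) m i) / k <= k.
  by rewrite ler_pdivrMr // -Dk.
set a := \sum_(_ <= _ < _ ) _; set b := \sum_(_ <= _ < _ ) _. lra.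
Qed.

Lemma sum_min_sigma (T : nat) (m : nat -> R) (s : R) :
  (forall t, 0 <= m t) -> (forall t, (1 <= t <= T)%N -> m t <= s) ->
  \sum_(1 <= t < T.+1) Order.min 1 (m t / t%:R) <= s * \sum_(1 <= t < T.+1) (t%:R : R)^-1.
Proof.
move=> m0 ms; rewrite mulr_sumr big_nat_cond [X in _ <= X]big_nat_cond.
apply: ler_sum => t /andP [/andP [h1 h2] _].
rewrite ge_min; apply/orP; right.
apply: ler_wpM2r; first by rewrite invr_ge0.
by apply: ms; rewrite h1 -ltnS.
Qed.
Lemma norm2_0 n : norm2 (0 : 'rV[R]_n) = 0.
Proof. by rewrite /norm2 dotp0l sqrtr0. Qed.

Lemma lip_h n (gt c a b : 'rV[R]_n) (lam G D : R) : 0 < lam ->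
  norm2 gt <= G -> norm2 (a - c) <= D -> norm2 (b - c) <= D ->
  (dotp gt a + lam / 2 * norm2 (a - c) ^+ 2) - (dotp gt b + lam / 2 * norm2 (b - c) ^+ 2)
    <= (G + lam * D) * norm2 (a - b).
Proof.
move=> lam0 hg ha hb.
have E : a - b = (a - c) - (b - c) by apply/rowP => i; rewrite !mxE; ring.
have E2 : norm2 (a - c) ^+ 2 - norm2 (b - c) ^+ 2 = dotp ((a - c) + (b - c)) (a - b).
  rewrite !norm2_sq E; move: (a - c) (b - c) => p q.
  rewrite !(dotpDl, dotpDr, dotpBl, dotpBr, dotpNl, dotpNr) (dotpC q p); ring.
have E3 : dotp gt a - dotp gt b = dotp gt (a - b) by rewrite dotpBr.
have C1 := CS gt (a - b).
have C2 : dotp ((a - c) + (b - c)) (a - b) <= (norm2 (a - c) + norm2 (b - c)) * norm2 (a - b).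
  by rewrite dotpDl mulrDl; apply: lerD; apply: CS.
have n0 := norm2_ge0 (a - b).
have na0 := norm2_ge0 (a - c).
have nb0 := norm2_ge0 (b - c).
have g0 := norm2_ge0 gt.
move: E2 E3 C1 C2.
set A := norm2 (a - c); set B := norm2 (b - c); set r := norm2 (a - b).
set ga := dotp gt a; set gb := dotp gt b; set gab := dotp gt (a - b).
set P := dotp _ (a - b).
move=> E2 E3 C1 C2.
have h1 : norm2 gt * r <= G * r by apply: ler_wpM2r.
have h2 : (A + B) * r <= (D + D) * r by apply: ler_wpM2r => //; apply: lerD.
have h3 : lam / 2 * P <= lam / 2 * ((D + D) * r).
  apply: ler_wpM2l; first by apply: divr_ge0 => //; apply: ltW.
  exact: le_trans C2 h2.
have -> : ga + lam / 2 * A ^+ 2 - (gb + lam / 2 * B ^+ 2) = gab + lam / 2 * P.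
  by rewrite -E2 -E3; ring.
lra.
Qed.

Lemma minRE (a b : R) : Order.min a b = if a < b then a else b.
Proof. by []. Qed.

Lemma minR_l (a b : R) : Order.min a b <= a.
Proof. rewrite minRE; case: ifP => // /negbT; rewrite -leNgt //. Qed.

Lemma minR_r (a b : R) : Order.min a b <= b.
Proof. rewrite minRE; case: ifP => // h; exact: ltW. Qed.

Lemma minR_glb (a b c : R) : c <= a -> c <= b -> c <= Order.min a b.
Proof. by rewrite minRE; case: ifP. Qed.

Lemma min_bound (B t m : R) : 0 <= B -> 0 < t -> 0 <= m ->
  Order.min (2 * B) (4 * (m + 3) * B / t) <= B * (12 / t + 4 * Order.min 1 (m / t)).
Proof.
move=> B0 t0 m0.
rewrite [Order.min 1 _]minRE.
case: ifP => h.
  apply: le_trans (minR_l _ _) _.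
  have : 0 <= 12 / t by rewrite divr_ge0 // ltW.
  nra.
apply: le_trans (minR_r _ _) _.
have -> : B * (12 / t + 4 * (m / t)) = 4 * (m + 3) * B / t.
  by field; rewrite gt_eqF.
by [].
Qed.

Lemma ftrl_objE n (d : nat -> nat) (lam : R) (g x : nat -> 'rV[R]_n) t y :
  ftrl_obj d lam g x t y = \sum_(tau <- obs d t.+1) dotp (g tau) y
    + lam / 2 * \sum_(1 <= s < t.+1) norm2 (y - x s) ^+ 2.
Proof. by []. Qed.
Theorem theorem3p1 :
  exists C : R, 0 < C /\
  forall (n T : nat) (X : set 'rV[R]_n) (lam G : R)
    (f : nat -> 'rV[R]_n -> R) (grad : nat -> 'rV[R]_n -> 'rV[R]_n)
    (d : nat -> nat) (x : nat -> 'rV[R]_n),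
    (1 <= n)%N -> (2 <= T)%N ->
    (exists x0, X x0) -> closed X -> convex_set_in X ->
    0 < lam -> 0 <= G ->
    (forall t, (1 <= t <= T)%N -> convex_on X (f t)) ->
    (forall t, (1 <= t <= T)%N -> forall y, X y -> is_gradient (f t) y (grad t y)) ->
    (forall t, (1 <= t <= T)%N -> strongly_convex_on X lam (f t) (grad t)) ->
    (forall t, (1 <= t <= T)%N -> forall y, X y -> norm2 (grad t y) <= G) ->
    (forall t, (1 <= t <= T)%N -> (t + d t <= T)%N) ->
    X (x 1%N) ->
    (forall t, (1 <= t < T)%N ->
       X (x t.+1) /\
       forall y, X y ->
         ftrl_obj d lam (fun tau => grad tau (x tau)) x t (x t.+1)
         <= ftrl_obj d lam (fun tau => grad tau (x tau)) x t y) ->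
    forall u, X u ->
      \sum_(1 <= t < T.+1) (f t (x t) - f t u)
      <= C * (G ^+ 2 / lam) *
         (ln (T%:R) + Order.min ((sigma_max T d)%:R * ln (T%:R))
                                (Num.sqrt ((d_tot T d)%:R))).
Proof.
exists 108; split; first lra.
move=> n T X lam G f grad d x n1 T2 [x0 Xx0] clX cvX lam0 G0 Hconv Hgrad Hsc Hgb Hd X1 Hftrl u Xu.
set g := fun tau => grad tau (x tau).
have Xx : forall t, (1 <= t <= T)%N -> X (x t).
  case=> [|[|t]] ht //.
  move/andP: ht => [_ h]; apply: (Hftrl t.+1 _).1.
  by apply/andP; split.
have gb : forall t, (1 <= t <= T)%N -> norm2 (g t) <= G.
  by move=> t ht; apply: Hgb => //; apply: Xx.
have T1 : (1 <= 1 <= T)%N by apply/andP; split => //; apply: ltnW.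
have diam : forall y z, X y -> X z -> norm2 (y - z) <= 2 * G / lam.
  move=> y z Xy Xz.
  have A := Hsc 1%N T1 y z Xy Xz; have B := Hsc 1%N T1 z y Xz Xy.
  rewrite (norm2_sub_sym z y) in A.
  have E1 : z - y = - (y - z) by rewrite opprB.
  rewrite E1 dotpNr in A.
  have C1 := CS (grad 1%N y) (y - z).
  have C2 := CS (- grad 1%N z) (y - z); rewrite dotpNl norm2N in C2.
  have g1 := Hgb 1%N T1 y Xy; have g2 := Hgb 1%N T1 z Xz.
  move: A B C1 C2 g1 g2.
  set N := norm2 (y - z); set a1 := dotp (grad 1%N y) (y - z); set a2 := dotp (grad 1%N z) (y - z).
  set n1' := norm2 (grad 1%N y); set n2' := norm2 (grad 1%N z).
  move=> A B C1 C2 g1 g2.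
  have N0 : 0 <= N by apply: norm2_ge0.
  have h1 : n1' * N <= G * N by apply: ler_wpM2r.
  have h2 : n2' * N <= G * N by apply: ler_wpM2r.
  have key : lam * N * N <= 2 * G * N by rewrite expr2 in A B; lra.
  have key2 : lam * N <= 2 * G.
    have [Nz|Np] := eqVneq N 0; first by rewrite Nz mulr0; lra.
    have Npos : 0 < N by rewrite lt_def Np N0.
    by rewrite -(ler_pM2r Npos).
  by rewrite ler_pdivlMr // mulrC.
set h := fun t y => dotp (g t) y + lam / 2 * norm2 (y - x t) ^+ 2.
have reg_h : forall t, (1 <= t <= T)%N -> f t (x t) - f t u <= h t (x t) - h t u.
  move=> t ht; have := Hsc t ht (x t) u (Xx t ht) Xu.
  rewrite /h subrr norm2_0 dotpBr -/(g t) expr0n mulr0 addr0.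
  lra.
have lip : forall t, (1 <= t <= T)%N -> forall a b, X a -> X b ->
    h t a - h t b <= 3 * G * norm2 (a - b).
  move=> t ht a b Xa Xb.
  have := lip_h lam0 (gb t ht) (diam a (x t) Xa (Xx t ht)) (diam b (x t) Xb (Xx t ht)).
  have -> : G + lam * (2 * G / lam) = 3 * G by field; rewrite gt_eqF.
  by [].
pose Phi t := Q lam (\sum_(1 <= s < t.+1) g s) (index_iota 1 t.+1) x.
have PhiE : forall t y, Phi t y = \sum_(1 <= s < t.+1) h s y.
  by move=> t y; rewrite /Phi /Q dotp_suml mulr_sumr -big_split.
have PhiS : forall t y, Phi t.+1 y = Phi t y + h t.+1 y.
  by move=> t y; rewrite !PhiE big_nat_recr.
have Phi0 : forall y, Phi 0%N y = 0.
  by move=> y; rewrite PhiE big_geq.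
have Hex : forall eps, 0 < eps -> forall t, (t <= T)%N ->
    exists z, X z /\ forall w, X w -> Phi t z <= Phi t w + eps.
  move=> eps eps0 t tT.
  set LB := \sum_(1 <= s < t.+1) (dotp (g s) x0 - G * (2 * G / lam)).
  have lb : forall y, X y -> LB <= Phi t y.
    move=> y Xy; rewrite PhiE /LB big_nat_cond [X in _ <= X]big_nat_cond.
    apply: ler_sum => s /andP [/andP [s1 s2] _].
    have hs : (1 <= s <= T)%N by rewrite s1 /=; apply: leq_trans tT; rewrite -ltnS.
    rewrite /h.
    have E : dotp (g s) y = dotp (g s) x0 - dotp (g s) (x0 - y) by rewrite dotpBr; ring.
    have C1 := CS (g s) (x0 - y).
    have nn : norm2 (g s) * norm2 (x0 - y) <= G * (2 * G / lam).
      apply: ler_pM; [exact: norm2_ge0 | exact: norm2_ge0 | exact: gb | exact: diam].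
    have q0 : 0 <= lam / 2 * norm2 (y - x s) ^+ 2.
      by apply: mulr_ge0; [apply: divr_ge0; [apply: ltW|] | apply: sqr_ge0].
    rewrite E; lra.
  set S := [set Phi t y | y in X].
  have hS : has_inf S.
    split; first by exists (Phi t x0), x0.
    by exists LB => v [y Xy <-]; apply: lb.
  have [e [z Xz <-] ez] := inf_adherent eps0 hS.
  exists z; split => // w Xw.
  have := ge_inf hS.2 (ex_intro2 _ _ w Xw erefl).
  lra.
have Fmin : forall t, (1 <= t <= T)%N -> forall y, X y ->
    ftrl_obj d lam g x t.-1 (x t) <= ftrl_obj d lam g x t.-1 y.
  case=> [|[|t]] ht y Xy //.
    by rewrite /ftrl_obj /obs /= !big_nil; apply: lexx.
  move/andP: ht => [_ h']; exact: ((Hftrl t.+1 (introT andP (conj isT h'))).2 y Xy).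
have Decomp : forall t, (1 <= t)%N -> forall y,
    Phi t y = ftrl_obj d lam g x t.-1 y + \sum_(tau <- miss d t) dotp (g tau) y + h t y.
  case=> [//|t] _ y; rewrite PhiS.
  have E : \sum_(s <- index_iota 1 t.+1) dotp (g s) y =
      \sum_(tau <- obs d t.+1) dotp (g tau) y + \sum_(tau <- miss d t.+1) dotp (g tau) y.
    rewrite /obs /miss !big_filter (bigID (fun tau => tau + d tau < t.+1)%N) /=.
    by rewrite /index_iota subSS subn0.
  rewrite ftrl_objE /Phi /Q dotp_suml E.
  ring.
have main : forall dl : R, 0 < dl -> dl <= 1 ->
   \sum_(1 <= t < T.+1) (f t (x t) - f t u) <=
   G * (G / lam) * (36 * \sum_(1 <= t < T.+1) (t%:R : R)^-1
      + 12 * \sum_(1 <= t < T.+1) Order.min 1 ((size (miss d t))%:R / t%:R))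
   + dl * (3 * G * T%:R + (T%:R + 1) * lam).
  move=> dl dl0 dl1.
  pose eps := lam * dl ^+ 2 / 8.
  have eps0 : 0 < eps by apply: divr_gt0 => //; apply: mulr_gt0 => //; apply: exprn_gt0.
  have Hex' : forall t, exists z, X z /\
      ((t <= T)%N -> forall w, X w -> Phi t z <= Phi t w + eps).
    move=> t; case: (leqP t T) => tT.
      by have [z [Xz Hz]] := Hex eps eps0 t tT; exists z; split.
    by exists x0; split => //; rewrite leqNgt tT.
  pose zt t := proj1_sig (cid (Hex' t)).
  have Xz : forall t, X (zt t) := fun t => (proj2_sig (cid (Hex' t))).1.
  have Hz : forall t, (t <= T)%N -> forall w, X w -> Phi t (zt t) <= Phi t w + eps :=
    fun t => (proj2_sig (cid (Hex' t))).2.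
  have BTL : forall N, (N <= T)%N ->
      \sum_(1 <= t < N.+1) h t (zt t) <= Phi N (zt N) + N%:R * eps.
    elim=> [|N IH] hN; first by rewrite big_geq // Phi0 mul0r addr0.
    rewrite big_nat_recr //= PhiS.
    have := IH (ltnW hN); have := Hz N (ltnW hN) (zt N.+1) (Xz _).
    rewrite -natr1.
    set A := \sum_(_ <= _ < _) _; set B1 := Phi N _; set B2 := Phi N _.
    move=> H1 H2; lra.
  have SumZ : \sum_(1 <= t < T.+1) h t (zt t) <= \sum_(1 <= t < T.+1) h t u + (T%:R + 1) * eps.
    have := BTL T (leqnn T); have := Hz T (leqnn T) u Xu; rewrite (PhiE T u).
    set A := \sum_(_ <= _ < _) h _ u; set B1 := \sum_(_ <= _ < _) h _ (zt _); set B2 := Phi T _.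
    move=> H1 H2; lra.
  have rbound : forall t, (1 <= t <= T)%N -> norm2 (x t - zt t) <=
      G / lam * (12 / t%:R + 4 * Order.min 1 ((size (miss d t))%:R / t%:R)) + dl.
    move=> t ht.
    have t1 : (1 <= t)%N by case/andP: ht.
    have tT : (t <= T)%N by case/andP: ht.
    have sz : size (index_iota 1 t.+1) = t by rewrite /index_iota size_iota subSS subn0.
    have App : Phi t (zt t) + lam * t%:R / 4 * norm2 (x t - zt t) ^+ 2 - 2 * eps <= Phi t (x t).
      by have := approx_min_sc cvX (Xz t) (Xx t ht) (Hz t tT); rewrite sz.
    have Dx := Decomp t t1 (x t); have Dz := Decomp t t1 (zt t).
    have Fm := Fmin t ht (zt t) (Xz t).
    have Lp := lip t ht (x t) (zt t) (Xx t ht) (Xz t).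
    set r := norm2 (x t - zt t) in App Lp *.
    set m := (size (miss d t))%:R.
    have r0 : 0 <= r by apply: norm2_ge0.
    have Ms : \sum_(tau <- miss d t) dotp (g tau) (x t)
        - \sum_(tau <- miss d t) dotp (g tau) (zt t) <= m * (G * r).
      rewrite -sumrB /m -sum_const_seq [X in X <= _]big_seq [X in _ <= X]big_seq.
      apply: ler_sum => tau Htau.
      move: Htau; rewrite mem_filter mem_iota => /andP [_ /andP [h1 h2]].
      have htau : (1 <= tau <= T)%N.
        by apply/andP; split => //; move: h2 tT t1; rewrite add1n prednK //; lia.
      rewrite -dotpBr; apply: le_trans (CS _ _) _.
      by apply: ler_wpM2r => //; apply: gb.
    have key : lam * t%:R / 4 * r ^+ 2 <= (m + 3) * G * r + 2 * eps.
      move: App Dx Dz Fm Lp Ms.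
      set P1 := Phi t (x t); set P2 := Phi t (zt t).
      set F1 := ftrl_obj _ _ _ _ _ (x t); set F2 := ftrl_obj _ _ _ _ _ (zt t).
      set S1 := \sum_(tau <- miss d t) dotp (g tau) (x t).
      set S2 := \sum_(tau <- miss d t) dotp (g tau) (zt t).
      set H1 := h t (x t); set H2 := h t (zt t).
      move=> App Dx Dz Fm Lp Ms.
      have -> : (m + 3) * G * r = m * (G * r) + 3 * G * r by ring.
      lra.
    have tR : 1 <= (t%:R : R) by rewrite ler1n.
    have tpos : 0 < (t%:R : R) by lra.
    have m0 : 0 <= m by rewrite /m ler0n.
    set a := 4 * (m + 3) * (G / lam) / t%:R.
    have a0 : 0 <= a.
      by rewrite /a; apply: divr_ge0; [apply: mulr_ge0; [lra | apply: divr_ge0 => //; lra] | lra].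
    have q : r ^+ 2 <= a * r + dl ^+ 2.
      have pos : 0 < lam * t%:R / 4 by apply: divr_gt0 => //; apply: mulr_gt0.
      rewrite -(ler_pM2l pos).
      have -> : lam * t%:R / 4 * (a * r + dl ^+ 2) = (m + 3) * G * r + lam * t%:R * dl ^+ 2 / 4.
        by rewrite /a; field; rewrite !gt_eqF.
      have : lam * dl ^+ 2 <= lam * t%:R * dl ^+ 2.
        rewrite -mulrA; apply: ler_wpM2l; first lra.
        by rewrite ler_peMl ?sqr_ge0.
      rewrite /eps in key; lra.
    have ra := quad_root r0 a0 (ltW dl0) q.
    have rd : r <= 2 * (G / lam) by rewrite mulrA; apply: diam; [apply: Xx | apply: Xz].
    have mn : r - dl <= Order.min (2 * (G / lam)) a by apply: minR_glb; lra.
    have := min_bound (m := m) (divr_ge0 G0 (ltW lam0)) tpos m0.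
    rewrite -/a; lra.
  set H := \sum_(1 <= t < T.+1) (t%:R : R)^-1.
  set mu := fun t : nat => Order.min 1 ((size (miss d t))%:R / (t%:R : R)).
  set M := \sum_(1 <= t < T.+1) mu t.
  have S1 : \sum_(1 <= t < T.+1) (f t (x t) - f t u) <= \sum_(1 <= t < T.+1) (h t (x t) - h t u).
    rewrite big_nat_cond [X in _ <= X]big_nat_cond.
    by apply: ler_sum => t /andP [ht _]; apply: reg_h; rewrite -ltnS.
  have S2 : \sum_(1 <= t < T.+1) (h t (x t) - h t (zt t)) <=
      \sum_(1 <= t < T.+1) (3 * G * (G / lam * (12 / t%:R + 4 * mu t) + dl)).
    rewrite big_nat_cond [X in _ <= X]big_nat_cond.
    apply: ler_sum => t /andP [ht _].
    have ht' : (1 <= t <= T)%N by rewrite -ltnS.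
    apply: le_trans (lip t ht' _ _ (Xx t ht') (Xz t)) _.
    apply: ler_wpM2l; first lra.
    exact: rbound.
  have E : \sum_(1 <= t < T.+1) (3 * G * (G / lam * (12 / t%:R + 4 * mu t) + dl)) =
      G * (G / lam) * (36 * H + 12 * M) + 3 * G * dl * T%:R.
    have Et : forall t, 3 * G * (G / lam * (12 / t%:R + 4 * mu t) + dl) =
        (36 * (G * (G / lam))) * (t%:R : R)^-1 + (12 * (G * (G / lam))) * mu t + 3 * G * dl.
      by move=> t; rewrite /mu; ring.
    under eq_bigr do rewrite Et.
    rewrite !big_split /= -!mulr_sumr sumr_const_nat subSS subn0 -mulr_natr -/H -/M.
    ring.
  have S3 : \sum_(1 <= t < T.+1) (h t (x t) - h t u) =
      \sum_(1 <= t < T.+1) (h t (x t) - h t (zt t)) +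
      (\sum_(1 <= t < T.+1) h t (zt t) - \sum_(1 <= t < T.+1) h t u).
    by rewrite !sumrB; ring.
  have epsb : (T%:R + 1) * eps <= dl * ((T%:R + 1) * lam).
    have T0 : 0 <= (T%:R : R) + 1 by have := ler0n R T; lra.
    have K0 : 0 <= (T%:R + 1) * lam by apply: mulr_ge0 => //; lra.
    have h2 : dl * dl <= dl * 1 by apply: ler_wpM2l; lra.
    have := ler_wpM2l K0 h2.
    have -> : eps = lam * (dl * dl) / 8 by rewrite /eps expr2.
    have : 0 <= (T%:R + 1) * lam * (dl * dl) by apply: mulr_ge0 => //; apply: mulr_ge0; lra.
    move=> h3 h4; lra.
  move: S1 S2 E S3 SumZ epsb.
  set R1 := \sum_(_ <= _ < _) (f _ _ - _).
  set R2 := \sum_(_ <= _ < _) (h _ (x _) - h _ u).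
  set R3 := \sum_(_ <= _ < _) (h _ (x _) - h _ (zt _)).
  set R4 := \sum_(_ <= _ < _) (3 * G * _).
  set Z1 := \sum_(_ <= _ < _) h _ (zt _).
  set Z2 := \sum_(_ <= _ < _) h _ u.
  move=> S1 S2 E S3 SumZ epsb.
  have -> : dl * (3 * G * T%:R + (T%:R + 1) * lam) = 3 * G * dl * T%:R + dl * ((T%:R + 1) * lam) by ring.
  lra.
set H := \sum_(1 <= t < T.+1) (t%:R : R)^-1 in main.
set M := \sum_(1 <= t < T.+1) Order.min 1 ((size (miss d t))%:R / (t%:R : R)) in main.
set K := 3 * G * T%:R + (T%:R + 1) * lam in main.
set L := ln (T%:R : R).
set sig := ((sigma_max T d)%:R : R).
set sq := Num.sqrt ((d_tot T d)%:R : R).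
have L2 : 1 / 2 <= L.
  apply: le_trans ln2_ge _; rewrite /L ler_ln ?posrE ?ltr0n ?(ltn_trans _ T2) //.
  by rewrite (ler_nat R 2 T).
have HL : H <= 3 * L.
  have := harmonic (ltnW T2); rewrite -/H -/L; lra.
have sig0 : 0 <= sig by rewrite /sig ler0n.
have sq0 : 0 <= sq by apply: sqrtr_ge0.
have m0 : forall t, 0 <= ((size (miss d t))%:R : R) by move=> t; rewrite ler0n.
have M1 : M <= 3 * (sig * L).
  have := @sum_min_sigma T (fun t => (size (miss d t))%:R) sig m0.
  have hs : forall t, (1 <= t <= T)%N -> ((size (miss d t))%:R : R) <= sig.
    by move=> t ht; rewrite /sig ler_nat; apply: miss_le_sigma.
  move=> /(_ hs); rewrite -/M -/H => hM.
  apply: le_trans hM _.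
  have : sig * H <= sig * (3 * L) by apply: ler_wpM2l.
  lra.
have M2 : M <= 2 * sq.
  apply: sum_min_sqrt => //.
  have := sum_miss T d; rewrite -(ler_nat R) natr_sum.
  by [].
have mn0 : 0 <= Order.min (sig * L) sq by apply: minR_glb => //; apply: mulr_ge0; lra.
have M3 : M <= 3 * Order.min (sig * L) sq.
  rewrite minRE; case: ifP => _; lra.
have GB0 : 0 <= G * (G / lam) by apply: mulr_ge0 => //; apply: divr_ge0 => //; lra.
have GBE : G ^+ 2 / lam = G * (G / lam) by rewrite expr2 mulrA.
have fin : G * (G / lam) * (36 * H + 12 * M) <=
    108 * (G ^+ 2 / lam) * (L + Order.min (sig * L) sq).
  rewrite GBE.
  have : 36 * H + 12 * M <= 108 * (L + Order.min (sig * L) sq) by lra.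
  move/(ler_wpM2l GB0); set W := 36 * H + 12 * M; set V := L + _; lra.
have K0 : 0 <= K by rewrite /K; apply: addr_ge0; [apply: mulr_ge0; [lra | apply: ler0n] | apply: mulr_ge0; [have := ler0n R T; lra | lra]].
apply/ler_addgt0Pr => e e0.
set dl := Order.min 1 (e / (K + 1)).
have eK : 0 < e / (K + 1) by apply: divr_gt0 => //; lra.
have dl0 : 0 < dl by rewrite /dl minRE; case: ifP => _; lra.
have dl1 : dl <= 1 by apply: minR_l.
have dl2 : dl * (K + 1) <= e.
  have : dl <= e / (K + 1) by apply: minR_r.
  by rewrite ler_pdivlMr //; lra.
have := main dl dl0 dl1.
have : dl * K <= dl * (K + 1) by apply: ler_wpM2l; lra.
move: fin; set A := _ * (36 * H + 12 * M); set B := 108 * _ * _; set Rg := \sum_(_ <= _ < _) _.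
move=> h1 h2 h3; lra.
Qed.
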